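(* Fix $B>1$ and $\alpha>0$. For a block $A$ (a map between real vector spaces) with approximation $A^\alpha$, let $$E_A^\alpha(e)=\sup_{\|\mathbf{x}+\mathbf{e}\|_\infty\le B,\ \|\mathbf{e}\|_\infty\le e}\|A^\alpha(\mathbf{x}+\mathbf{e})-A(\mathbf{x})\|_\infty .$$ Then for every $e\ge0$: (a) If $A$ is a linear block $A(\mathbf{x})=\mathbf{A}\mathbf{x}+\mathbf{b}$ with $A^\alpha=A$, then $E_A^\alpha(e)\le\|\mathbf{A}\|_\infty e$, where $\|\mathbf{A}\|_\infty$ is the matrix infinity norm (maximum absolute row sum). (b) If $A$ is a ReLU block (coordinatewise $\mathrm{ReLU}(x)=\max(x,0)$) and $A^\alpha$ applies $\tilde r_{\alpha,B}$ coordinatewise, then $E_A^\alpha(e)\le B2^{-\alpha}+e$. (c) If $A$ is a max-pooling block with kernel size $k_0\le 10$ (each output coordinate is the maximum of a window of $k_0^2$ input coordinates), $A^\alpha$ replaces each such maximum by $\tilde M_{\alpha,k_0^2,B}$ applied to the same window, and $\alpha\ge 4$, then $E_A^\alpha(e)\le 10B\lceil\log_2 k_0^2\rceil 2^{-\alpha}+e$. (d) If $A$ is a softmax block $A(\mathbf{x})=\big(\exp(x_i)/\sum_j\exp(x_j)\big)_{1\le i\le N}$ with $A^\alpha=A$, then $E_A^\alpha(e)\le e/2$.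
   Context: Let $p_\alpha$ be a polynomial such that $m_\alpha(a,b)=\frac{(a+b)+(a-b)p_\alpha(a-b)}{2}$ satisfies $|m_\alpha(a,b)-\max(a,b)|\le2^{-\alpha}$ for all $a,b\in[0,1]$. Define $r_\alpha(x)=\frac{x+xp_\alpha(x)}{2}$ and $\tilde r_{\alpha,B}(x)=B\,r_\alpha(x/B)$. Define $M_{\alpha,1}(x_1)=x_1$, $M_{\alpha,2k}(x_1,\dots,x_{2k})=m_\alpha(M_{\alpha,k}(x_1,\dots,x_k),M_{\alpha,k}(x_{k+1},\dots,x_{2k}))$, $M_{\alpha,2k+1}(x_1,\dots,x_{2k+1})=m_\alpha(M_{\alpha,k}(x_1,\dots,x_k),M_{\alpha,k+1}(x_{k+1},\dots,x_{2k+1}))$, and $$\tilde M_{\alpha,n,B}(x_1,\dots,x_n)=B'\Big(M_{\alpha,n}\big(\tfrac{x_1}{B'}+0.5,\dots,\tfrac{x_n}{B'}+0.5\big)-0.5\Big),\quad B'=\frac{B}{0.5-(\lceil\log_2 n\rceil-1)2^{-\alpha}}.$$ *)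

(* Defs.v *)
From HB Require Import structures.
From mathcomp Require Import all_boot all_order all_algebra.
From mathcomp Require Import all_classical all_reals all_analysis.
Set Implicit Arguments. Unset Strict Implicit. Unset Printing Implicit Defensive.
Import Order.TTheory GRing.Theory Num.Theory.
Local Open Scope ring_scope.
Local Open Scope classical_set_scope.

Section Defs.
Variable R : realType.

Definition m_al (p : {poly R}) (a b : R) : R :=
  ((a + b) + (a - b) * p.[a - b]) / 2.

Definition r_al (p : {poly R}) (x : R) : R := (x + x * p.[x]) / 2.

Definition rt_al (p : {poly R}) (B x : R) : R := B * r_al p (x / B).

Fixpoint M_fuel (p : {poly R}) (fuel : nat) (s : seq R) : R :=
  match fuel with
  | 0%N => head 0 s
  | f.+1 =>
      if (size s <= 1)%N then head 0 s
      else let k := (size s)./2 in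
           m_al p (M_fuel p f (take k s)) (M_fuel p f (drop k s))
  end.

Definition M_al (p : {poly R}) (s : seq R) : R := M_fuel p (size s) s.

(* B' = B / (0.5 - (ceil(log2 n) - 1) 2^{-alpha});  ceil(log2 n) = up_log 2 n *)
Definition Bprime (alpha B : R) (n : nat) : R :=
  B / (2^-1 - ((up_log 2 n)%:R - 1) * (2 `^ (- alpha))).

Definition Mt_al (p : {poly R}) (alpha B : R) (s : seq R) : R :=
  let B' := Bprime alpha B (size s) in
  B' * (M_al p [seq x / B' + 2^-1 | x <- s] - 2^-1).

Definition vnorm n (x : 'cV[R]_n) : R := \big[Num.max/0]_(i < n) `|x i ord0|.

Definition mnorm m n (A : 'M[R]_(m, n)) : R :=
  \big[Num.max/0]_(i < m) \sum_(j < n) `|A i j|.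

Definition Err n m (A Aal : 'cV[R]_n -> 'cV[R]_m) (B e : R) : \bar R :=
  ereal_sup [set r : \bar R | exists (x d : 'cV[R]_n),
     [/\ vnorm (x + d) <= B, vnorm d <= e & r = (vnorm (Aal (x + d) - A x))%:E] ].

Definition listmax (s : seq R) : R := \big[Num.max/head 0 s]_(y <- s) y.

Definition linear_block m n (A : 'M[R]_(m, n)) (b : 'cV[R]_m) (x : 'cV[R]_n)
  : 'cV[R]_m := A *m x + b.

Definition relu (x : R) : R := Num.max x 0.
Definition relu_block n (x : 'cV[R]_n) : 'cV[R]_n := map_mx relu x.
Definition relu_block_al (p : {poly R}) (B : R) n (x : 'cV[R]_n) : 'cV[R]_n :=
  map_mx (rt_al p B) x.

(* max pooling: output coordinate i is the max of the window
   x_{w i 0}, ..., x_{w i (K-1)}, with K = k0^2 *)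
Definition window n K (w : 'I_K -> 'I_n) (x : 'cV[R]_n) : seq R :=
  [seq x (w j) ord0 | j <- enum 'I_K].
Definition maxpool_block n m K (w : 'I_m -> 'I_K -> 'I_n) (x : 'cV[R]_n)
  : 'cV[R]_m := \col_(i < m) listmax (window (w i) x).
Definition maxpool_block_al (p : {poly R}) (alpha B : R) n m K
  (w : 'I_m -> 'I_K -> 'I_n) (x : 'cV[R]_n) : 'cV[R]_m :=
  \col_(i < m) Mt_al p alpha B (window (w i) x).

Definition softmax_block N (x : 'cV[R]_N) : 'cV[R]_N :=
  \col_(i < N) (expR (x i ord0) / \sum_(j < N) expR (x j ord0)).

End Defs.

(* Main.v *)
Require Import Defs.
From HB Require Import structures.
From mathcomp Require Import all_boot all_order all_algebra.
From mathcomp Require Import all_classical all_reals all_analysis.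
From mathcomp Require Import ring lra zify.
Set Implicit Arguments. Unset Strict Implicit. Unset Printing Implicit Defensive.
Import Order.TTheory GRing.Theory Num.Theory.
Local Open Scope ring_scope.

Section H.
Variable R : realType.

Lemma vnorm_le n (v : 'cV[R]_n) c : 0 <= c -> (forall i, `|v i ord0| <= c) -> vnorm v <= c.
Proof. move=> c0 H; rewrite /vnorm; exact: bigmax_le. Qed.

Lemma vnorm_ge n (v : 'cV[R]_n) i : `|v i ord0| <= vnorm v.
Proof. exact: le_bigmax. Qed.

Lemma vnorm_ge0 n (v : 'cV[R]_n) : 0 <= vnorm v.
Proof. by rewrite /vnorm; elim/big_ind: _ => // x y; rewrite le_max => ->. Qed.

Lemma Err_le n m (A Aal : 'cV[R]_n -> 'cV[R]_m) B e c :
  0 <= c ->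
  (forall x d : 'cV[R]_n, vnorm (x + d) <= B -> vnorm d <= e ->
     forall i, `|(Aal (x + d)) i ord0 - (A x) i ord0| <= c) ->
  (Err A Aal B e <= c%:E)%E.
Proof.
move=> c0 H; apply: ge_ereal_sup => _ [x [d [h1 h2 ->]]].
rewrite lee_fin; apply: vnorm_le => // i; rewrite !mxE; exact: H.
Qed.

Lemma partA (B e : R) m n (A : 'M[R]_(m, n)) (b : 'cV[R]_m) : 0 <= e ->
  (Err (linear_block A b) (linear_block A b) B e <= (mnorm A * e)%:E)%E.
Proof.
move=> e0.
have mn0 : 0 <= mnorm A.
  rewrite /mnorm; apply: (big_ind (fun x => 0 <= x)) => // [x y|i _].
    by rewrite le_max => ->.
  exact: sumr_ge0.
apply: Err_le => [|x d _ hd i]; first exact: mulr_ge0.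
rewrite /linear_block mulmxDr !mxE.
set u := \sum_j _ * x _ _; set v := \sum_j _ * d _ _.
have -> : u + v + b i ord0 - (u + b i ord0) = v by ring.
rewrite /v; apply: (le_trans (ler_norm_sum _ _ _)).
apply: (@le_trans _ _ (\sum_(j < n) `|A i j| * e)).
  apply: ler_sum => j _; rewrite normrM; apply: ler_wpM2l => //.
  exact: le_trans (vnorm_ge d j) hd.
rewrite -mulr_suml; apply: ler_wpM2r => //.
rewrite /mnorm; exact: le_bigmax.
Qed.

Lemma r_bound (p : {poly R}) (eps : R) :
  (forall a b : R, 0 <= a <= 1 -> 0 <= b <= 1 -> `|m_al p a b - Num.max a b| <= eps) ->
  forall t : R, -1 <= t <= 1 -> `|r_al p t - relu t| <= eps.
Proof.
move=> H t /andP[t1 t2]; case: (leP 0 t) => t0.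
  have := H t 0; rewrite /m_al /r_al /relu !subr0 addr0.
  rewrite (max_idPl t0); apply; lra.
have h := H 0 (- t); move: h; rewrite /m_al /r_al /relu (max_idPr (ltW t0)).
have -> : Num.max 0 (- t) = - t by apply/max_idPr; lra.
rewrite sub0r opprK add0r subr0.
have -> : (- t + t * p.[t]) / 2 + t = (t + t * p.[t]) / 2 by field.
apply; lra.
Qed.

Lemma relu_lip (x y : R) : `|relu y - relu x| <= `|y - x|.
Proof.
have h1 := ler_norm (y - x); have h2 := ler_norm (x - y); rewrite distrC in h2.
rewrite /relu ler_norml; case: (leP x 0) => hx; case: (leP y 0) => hy; apply/andP; split; lra.
Qed.

Lemma relu_hom (B y : R) : 0 < B -> B * relu (y / B) = relu y.
Proof.
move=> B0; rewrite /relu.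
have -> : y = (y / B) * B by field; lra.
rewrite mulrK ?unitfE ?gt_eqF //.
set z := y / B.
case: (leP z 0) => h1; case: (leP (z * B) 0) => h2; try nra.
Qed.

Lemma partB (p : {poly R}) (B e eps : R) n : 1 < B -> 0 <= e -> 0 <= eps ->
  (forall a b : R, 0 <= a <= 1 -> 0 <= b <= 1 -> `|m_al p a b - Num.max a b| <= eps) ->
  (Err (@relu_block R n) (relu_block_al p B (n:=n)) B e <= (B * eps + e)%:E)%E.
Proof.
move=> B1 e0 eps0 H; have B0 : 0 < B by lra.
apply: Err_le => [|x d hy hd i]; first by apply: addr_ge0 => //; apply: mulr_ge0 => //; lra.
rewrite /relu_block /relu_block_al !mxE.
set y := x i ord0 + d i ord0.
have yB : `|y| <= B.
  by have := le_trans (vnorm_ge (x + d) i) hy; rewrite mxE.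
have di : `|d i ord0| <= e by exact: le_trans (vnorm_ge d i) hd.
have -> : rt_al p B y - relu (x i ord0)
  = B * (r_al p (y / B) - relu (y / B)) + (relu y - relu (x i ord0)).
  by rewrite /rt_al mulrBr relu_hom //; ring.
apply: (le_trans (ler_normD _ _)); apply: lerD.
  rewrite normrM (gtr0_norm B0) ler_pM2l //; apply: r_bound => //.
  have := yB; rewrite ler_norml => /andP[h1 h2].
  apply/andP; split.
    by rewrite ler_pdivlMr // mulN1r.
  by rewrite ler_pdivrMr // mul1r.
apply: (le_trans (relu_lip _ _)).
by rewrite /y addrC addKr.
Qed.
Lemma psi_ge0 (x : R) : 0 <= x -> 2 * (expR x - 1) <= x * (expR x + 1).
Proof.
move=> x0.
pose f := (fun u : R => u * (expR u + 1) - 2 * (expR u - 1)).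
have D t : is_derive t (1:R) f (expR t + 1 + t * expR t - 2 * expR t).
  rewrite /f; apply: is_derive_eq.
    by rewrite /GRing.scale /= !addr0 !subr0; ring.
have f0 : f 0 = 0 by rewrite /f expR0; ring.
suff : f 0 <= f x by rewrite f0 /f subr_ge0.
apply: (@ger0_derive1_ndecr _ f 0 x); rewrite ?lexx //.
- move=> t _; rewrite derive1E; case: (D t) => _ ->.
  have h := expR_ge1Dx (- t); rewrite expRN in h.
  have E := expR_gt0 t; have V : expR t * (expR t)^-1 = 1 by rewrite mulfV // gt_eqF.
  nra.
- apply: derivable_within_continuous => t _; by case: (D t).
Qed.

Lemma frac_mono (x y X Y : R) : 0 < x -> 0 <= Y -> x <= X -> Y <= y ->
  x / (x + y) <= X / (X + Y).
Proof.
move=> x0 Y0 xX Yy.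
have X0 : 0 < X by lra. have y0 : 0 <= y by lra.
rewrite ler_pdivrMr ?(ltr_wpDr y0) // mulrAC ler_pdivlMr ?(ltr_wpDr Y0) //.
nra.
Qed.

Lemma sm_bound (a b a' b' q e : R) : 0 < a -> 0 <= b -> 1 <= q ->
  a * q^-1 <= a' <= a * q -> b * q^-1 <= b' <= b * q ->
  2 * (q - 1) <= e * (q + 1) ->
  `|a' / (a' + b') - a / (a + b)| <= e / 2.
Proof.
move=> a0 b0 q1 /andP[a1 a2] /andP[b1 b2] hq.
have q0 : 0 < q by lra.
have qi : 0 < q^-1 by rewrite invr_gt0.
have qq : q * q^-1 = 1 by rewrite mulfV // gt_eqF.
have a'0 : 0 < a' by apply: lt_le_trans a1; apply: mulr_gt0.
have b'0 : 0 <= b' by apply: le_trans b1; apply: mulr_ge0 => //; lra.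
have hqe : (q - 1) / (q + 1) <= e / 2.
  rewrite ler_pdivrMr; last lra.
  have -> : e / 2 * (q + 1) = (e * (q + 1)) / 2 by ring.
  lra.
have up : a' / (a' + b') <= (a * q) / (a * q + b * q^-1).
  by apply: frac_mono => //; apply: mulr_ge0 => //; apply: ltW.
have lo : (a * q^-1) / (a * q^-1 + b * q) <= a' / (a' + b').
  by apply: frac_mono => //; exact: mulr_gt0.
have E1 : (q - 1) / (q + 1) - ((a * q) / (a * q + b * q^-1) - a / (a + b))
   = (q - 1) * (a * q - b) ^+ 2 / ((q + 1) * (a * q * q + b) * (a + b)).
  field; apply/and4P; split; try (rewrite gt_eqF //; nra); nra.
have E2 : (q - 1) / (q + 1) - (a / (a + b) - (a * q^-1) / (a * q^-1 + b * q))
   = (q - 1) * (a - b * q) ^+ 2 / ((q + 1) * (a + b * q * q) * (a + b)).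
  field; apply/and4P; split; try (rewrite gt_eqF //; nra); nra.
have P1 : 0 <= (q - 1) * (a * q - b) ^+ 2 / ((q + 1) * (a * q * q + b) * (a + b)).
  apply: divr_ge0; [apply: mulr_ge0; [lra | exact: sqr_ge0] | ].
  apply: mulr_ge0; [apply: mulr_ge0|]; nra.
have P2 : 0 <= (q - 1) * (a - b * q) ^+ 2 / ((q + 1) * (a + b * q * q) * (a + b)).
  apply: divr_ge0; [apply: mulr_ge0; [lra | exact: sqr_ge0] | ].
  apply: mulr_ge0; [apply: mulr_ge0|]; nra.
rewrite ler_norml; apply/andP; split; lra.
Qed.

Lemma partD (B e : R) N : 0 <= e ->
  (Err (@softmax_block R N) (@softmax_block R N) B e <= (e / 2)%:E)%E.
Proof.
move=> e0; apply: Err_le => [|x d _ hd i]; first by apply: divr_ge0.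
rewrite /softmax_block !mxE.
have -> : \sum_(j < N) expR ((x + d) j ord0) = \sum_(j < N) expR (x j ord0 + d j ord0).
  by apply: eq_bigr => j _; rewrite mxE.
have dj j : `|d j ord0| <= e by exact: le_trans (vnorm_ge d j) hd.
rewrite (bigD1 i) //= [X in _ - _ / X](bigD1 i) //=.
set q := expR e.
apply: (@sm_bound (expR (x i ord0)) (\sum_(j < N | j != i) expR (x j ord0)) _ _ q).
- exact: expR_gt0.
- by apply: sumr_ge0 => j _; exact: expR_ge0.
- by rewrite /q -expR0 ler_expR.
- have := dj i; rewrite ler_norml => /andP[h1 h2].
  rewrite expRD /q -expRN ler_pM2l ?expR_gt0 // ler_expR h1 /=.
  by rewrite ler_pM2l ?expR_gt0 // ler_expR.
- apply/andP; split; rewrite mulr_suml; apply: ler_sum => j _;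
  have := dj j; rewrite ler_norml => /andP[h1 h2];
  rewrite expRD ?(ler_pM2l (expR_gt0 _)) ?ler_expR //.
  by rewrite /q -expRN ler_expR.
- rewrite /q; have := psi_ge0 e0; lra.
Qed.
End H.

Section C.
Variable R : realType.

Lemma listmax_ub (s : seq R) y : y \in s -> y <= listmax s.
Proof. by move=> ys; rewrite /listmax; apply: (le_bigmax_seq _ y xpredT (fun z => z) ys). Qed.

Lemma listmax_in (s : seq R) : s != [::] -> listmax s \in s.
Proof.
case: s => // a s' _; rewrite /listmax big_seq /=.
apply: (big_ind (fun z => z \in a :: s')) => //; first exact: mem_head.
by move=> u v hu hv; case: leP.
Qed.

Lemma listmax_char (s : seq R) z : z \in s -> (forall y, y \in s -> y <= z) -> listmax s = z.
Proof.
move=> zs ub; apply: le_anti; rewrite listmax_ub // andbT.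
apply: ub; apply: listmax_in; by case: s zs.
Qed.

Lemma listmax_cat (s1 s2 : seq R) : s1 != [::] -> s2 != [::] ->
  listmax (s1 ++ s2) = Num.max (listmax s1) (listmax s2).
Proof.
move=> n1 n2; apply: listmax_char.
  by rewrite mem_cat; case: leP => _; rewrite listmax_in ?orbT.
move=> y; rewrite mem_cat => /orP[] hy; rewrite le_max.
  by rewrite (listmax_ub hy).
by rewrite (listmax_ub hy) orbT.
Qed.

Lemma listmax_map (f : R -> R) (s : seq R) : s != [::] -> {homo f : x y / x <= y} ->
  listmax (map f s) = f (listmax s).
Proof.
move=> ns hf; apply: listmax_char; first by apply: map_f; exact: listmax_in.
by move=> _ /mapP[y ys ->]; apply: hf; exact: listmax_ub.
Qed.

Lemma listmax_lip (I : eqType) (r : seq I) (f g : I -> R) e : r != [::] ->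
  (forall i, `|f i - g i| <= e) -> `|listmax (map f r) - listmax (map g r)| <= e.
Proof.
move=> nr H.
have nf : map f r != [::] by move: nr; case: (r).
have ng : map g r != [::] by move: nr; case: (r).
have /mapP[i ir Ei] := listmax_in nf.
have /mapP[j jr Ej] := listmax_in ng.
have h1 : g i <= listmax (map g r) by apply: listmax_ub; exact: map_f.
have h2 : f j <= listmax (map f r) by apply: listmax_ub; exact: map_f.
have := H i; have := H j; rewrite !ler_norml Ei Ej => /andP[a1 a2] /andP[b1 b2].
rewrite Ei Ej in h1 h2.
apply/andP; split; lra.
Qed.

Lemma max_lip (a b c d : R) : `|Num.max a b - Num.max c d| <= Num.max `|a - c| `|b - d|.
Proof.
have h1 := ler_norm (a - c); have h2 := ler_norm (c - a); rewrite distrC in h2.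
have h3 := ler_norm (b - d); have h4 := ler_norm (d - b); rewrite distrC in h4.
rewrite ler_norml; case: (leP a b) => hab; case: (leP c d) => hcd;
  case: (leP `|a - c| `|b - d|) => hm; apply/andP; split; lra.
Qed.


Lemma listmax1 (y : R) : listmax [:: y] = y.
Proof. by apply: listmax_char => [|z]; rewrite mem_seq1 // => /eqP ->. Qed.

Lemma M_small (p : {poly R}) fuel (s : seq R) : s != [::] -> (size s <= 1)%N ->
  (size s <= fuel)%N -> M_fuel p fuel s = listmax s.
Proof.
case: s => // y [|//] _ _; case: fuel => // f _ /=.
by rewrite listmax1.
Qed.

Lemma M_fuel_err (p : {poly R}) (eps : R) : 0 <= eps ->
  (forall a b : R, 0 <= a <= 1 -> 0 <= b <= 1 -> `|m_al p a b - Num.max a b| <= eps) ->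
  forall L fuel (s : seq R), s != [::] -> (size s <= 2 ^ L)%N -> (size s <= fuel)%N ->
  (forall y, y \in s -> (L%:R - 1) * eps <= y <= 1 - (L%:R - 1) * eps) ->
  `|M_fuel p fuel s - listmax s| <= L%:R * eps.
Proof.
move=> eps0 H; elim=> [|L IH] fuel s ns hs hf hy.
  by rewrite M_small // subrr normr0 mul0r.
have [s1|s2] := leqP (size s) 1.
  by rewrite M_small // subrr normr0; apply: mulr_ge0.
case: fuel hf => [|f] hf; first by move: hf; rewrite leqn0 => /eqP h; move: s2; rewrite h.
rewrite /= leqNgt s2 /=.
set k := (size s)./2.
have ho := odd_double_half (size s).
have ob : (odd (size s) <= 1)%N by case: odd.
rewrite -/k -muln2 in ho.
have sz1 : size (take k s) = k by rewrite size_take; case: ltnP => //; lia.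
have sz2 : size (drop k s) = (size s - k)%N by rewrite size_drop.
have ne1 : take k s != [::] by rewrite -size_eq0 sz1; lia.
have ne2 : drop k s != [::] by rewrite -size_eq0 sz2; lia.
have LR : ((L.+1)%:R - 1) * eps = L%:R * eps by rewrite -addn1 natrD addrK.
have hy' : forall y, y \in s -> (L%:R - 1) * eps <= y <= 1 - (L%:R - 1) * eps.
  move=> y /hy; rewrite LR => /andP[h1 h2]; apply/andP; split; nra.
have e2L : (2 ^ L.+1 = 2 ^ L * 2)%N by rewrite expnS mulnC.
have I1 := IH f (take k s) ne1 ltac:(rewrite sz1; lia) ltac:(rewrite sz1; lia)
  (fun y ys => hy' y (mem_take ys)).
have I2 := IH f (drop k s) ne2 ltac:(rewrite sz2; lia) ltac:(rewrite sz2; lia)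
  (fun y ys => hy' y (mem_drop ys)).
set a := M_fuel p f (take k s) in I1 *.
set b := M_fuel p f (drop k s) in I2 *.
have /hy := mem_take (listmax_in ne1); rewrite LR => /andP[m1 m2].
have /hy := mem_drop (listmax_in ne2); rewrite LR => /andP[m3 m4].
have LS : listmax s = Num.max (listmax (take k s)) (listmax (drop k s)).
  by rewrite -listmax_cat // cat_take_drop.
have Hab := H a b.
rewrite LS.
have A1 := I1; have A2 := I2.
rewrite ler_norml in A1; rewrite ler_norml in A2.
case/andP: A1 => A1 A1'; case/andP: A2 => A2 A2'.
have {}Hab : `|m_al p a b - Num.max a b| <= eps.
  by apply: Hab; apply/andP; split; lra.
have ML := max_lip a b (listmax (take k s)) (listmax (drop k s)).
have MM : Num.max `|a - listmax (take k s)| `|b - listmax (drop k s)| <= L%:R * eps by rewrite ge_max I1 I2.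
have -> : m_al p a b - Num.max (listmax (take k s)) (listmax (drop k s)) =
  (m_al p a b - Num.max a b) + (Num.max a b - Num.max (listmax (take k s)) (listmax (drop k s))) by ring.
apply: (le_trans (ler_normD _ _)).
rewrite -addn1 natrD mulrDl mul1r addrC; apply: lerD => //.
exact: le_trans ML MM.
Qed.


Lemma eps_small (alpha : R) : 4 <= alpha -> 2 `^ (- alpha) <= 1 / 16.
Proof.
move=> a4; apply: (@le_trans _ _ (2 `^ (- 4))).
  by apply: ler_powR; [lra | lra].
rewrite powRN powR_mulrn; last lra.
by rewrite mul1r (_ : 2 ^+ 4 = 16 :> R) //; ring.
Qed.

Lemma Mt_err (p : {poly R}) (alpha B e : R) K (f g : 'I_K -> R) :
  (forall a b : R, 0 <= a <= 1 -> 0 <= b <= 1 ->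
     `|m_al p a b - Num.max a b| <= 2 `^ (- alpha)) ->
  1 < B -> 4 <= alpha -> (0 < K)%N -> (K <= 100)%N ->
  (forall j, `|f j| <= B) -> (forall j, `|f j - g j| <= e) ->
  `|Mt_al p alpha B (map f (enum 'I_K)) - listmax (map g (enum 'I_K))|
    <= 10 * B * (up_log 2 K)%:R * 2 `^ (- alpha) + e.
Proof.
move=> H B1 a4 K0 K100 fB fg.
set eps := 2 `^ (- alpha).
have e0 : 0 < eps by apply: powR_gt0.
have e16 : eps <= 1 / 16 by apply: eps_small.
set r := enum 'I_K.
have nr : r != [::] by rewrite -size_eq0 size_enum_ord; lia.
set s := map f r.
have ns : s != [::] by rewrite /s; move: nr; case: (r).
have szs : size s = K by rewrite size_map size_enum_ord.
set L := up_log 2 K.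
have L7 : (L <= 7)%N by apply: up_log_min => //; apply: leq_trans K100 _.
have l7 : (L%:R : R) <= 7 by rewrite (_ : 7 = 7%:R :> R) // ler_nat.
have l0 : (0 : R) <= L%:R by rewrite ler0n.
set D := 2^-1 - (L%:R - 1) * eps.
have D8 : 1 / 8 <= D by rewrite /D; nra.
have D0 : 0 < D by lra.
have B0 : 0 < B by lra.
set B' := B / D.
have B'0 : 0 < B' by apply: divr_gt0.
rewrite /Mt_al szs.
rewrite (_ : Bprime alpha B K = B') //.
set h := fun x : R => x / B' + 2^-1.
set s' := map h s.
have ns' : s' != [::] by rewrite /s'; move: ns; case: (s).
have hm : {homo h : x y / x <= y}.
  by move=> x y xy; rewrite /h lerD2r ler_pM2r // invr_gt0.
have Ls' : listmax s' = h (listmax s) by apply: listmax_map.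
have szs' : size s' = K by rewrite size_map.
have Mb : `|M_al p s' - listmax s'| <= L%:R * eps.
  rewrite /M_al; apply: M_fuel_err => //; first exact: ltW.
  - rewrite szs'; exact: up_logP.
  - move=> _ /mapP[y /mapP[j _ ->] ->]; rewrite /h.
    have := fB j; rewrite ler_norml => /andP[f1 f2].
    have -> : f j / B' = f j * (D / B) by rewrite /B'; field; apply/andP; split; lra.
    have c0 : 0 < D / B by apply: divr_gt0.
    have c1 : B * (D / B) = D by field; lra.
    have g1 : f j * (D / B) <= B * (D / B) by rewrite ler_pM2r.
    have g2 : (- B) * (D / B) <= f j * (D / B) by rewrite ler_pM2r.
    rewrite mulNr c1 in g2; rewrite c1 in g1.
    apply/andP; split; rewrite /D in g1 g2 *; lra.
rewrite Ls' /h in Mb.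
have -> : B' * (M_al p s' - 2^-1) - listmax (map g r)
  = B' * (M_al p s' - (listmax s / B' + 2^-1)) + (listmax s - listmax (map g r)).
  by field; lra.
apply: (le_trans (ler_normD _ _)); apply: lerD; last exact: listmax_lip.
rewrite normrM (gtr0_norm B'0).
have BB : B' <= 10 * B.
  rewrite /B' ler_pdivrMr //; nra.
apply: (le_trans (ler_wpM2l (ltW B'0) Mb)).
have -> : 10 * B * L%:R * eps = 10 * B * (L%:R * eps) by ring.
by apply: ler_wpM2r => //; apply: mulr_ge0 => //; exact: ltW.
Qed.


Lemma partC (p : {poly R}) (alpha B e : R) k0 n m (w : 'I_m -> 'I_(k0 ^ 2) -> 'I_n) :
  (forall a b : R, 0 <= a <= 1 -> 0 <= b <= 1 ->
     `|m_al p a b - Num.max a b| <= 2 `^ (- alpha)) ->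
  1 < B -> 0 <= e -> (0 < k0 <= 10)%N -> 4 <= alpha ->
  (Err (maxpool_block w) (maxpool_block_al p alpha B w) B e
     <= (10 * B * (up_log 2 (k0 ^ 2))%:R * 2 `^ (- alpha) + e)%:E)%E.
Proof.
move=> H B1 e0 hk a4.
have K0 : (0 < k0 ^ 2)%N by rewrite expnS expn1; nia.
have K100 : (k0 ^ 2 <= 100)%N by rewrite expnS expn1; nia.
apply: Err_le => [|x d hy hd i].
  apply: addr_ge0 => //; apply: mulr_ge0; last exact: ltW (powR_gt0 _ _).
  by apply: mulr_ge0; [apply: mulr_ge0; lra | exact: ler0n].
  all: try lra.
rewrite /maxpool_block /maxpool_block_al !mxE /window.
apply: Mt_err => //.
- move=> j; exact: le_trans (vnorm_ge (x + d) (w i j)) hy.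
- move=> j /=; rewrite mxE.
  have -> : x (w i j) ord0 + d (w i j) ord0 - x (w i j) ord0 = d (w i j) ord0 by ring.
  exact: le_trans (vnorm_ge d (w i j)) hd.
Qed.
End C.

Theorem lemma1 (R : realType) (B alpha : R) (p : {poly R}) :
  1 < B -> 0 < alpha ->
  (forall a b : R, 0 <= a <= 1 -> 0 <= b <= 1 ->
     `|m_al p a b - Num.max a b| <= 2 `^ (- alpha)) ->
  forall e : R, 0 <= e ->
  [/\ (* (a) linear block *)
      (forall (m n : nat) (A : 'M[R]_(m, n)) (b : 'cV[R]_m),
         (Err (linear_block A b) (linear_block A b) B e
            <= (mnorm A * e)%:E)%E),
      (* (b) ReLU block *)
      (forall n : nat,
         (Err (@relu_block R n) (relu_block_al p B (n:=n)) B e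
            <= (B * 2 `^ (- alpha) + e)%:E)%E),
      (* (c) max-pooling block, kernel size k0 <= 10, windows of k0^2 inputs *)
      (forall (k0 n m : nat) (w : 'I_m -> 'I_(k0 ^ 2) -> 'I_n),
         (0 < k0 <= 10)%N -> 4 <= alpha ->
         (Err (maxpool_block w) (maxpool_block_al p alpha B w) B e
            <= (10 * B * (up_log 2 (k0 ^ 2))%:R * 2 `^ (- alpha) + e)%:E)%E)
    & (* (d) softmax block *)
      (forall N : nat,
         (Err (@softmax_block R N) (@softmax_block R N) B e <= (e / 2)%:E)%E)].
Proof.
move=> B1 a0 H e e0; split.
- by move=> m n A b; exact: partA.
- move=> n; apply: partB => //; exact: ltW (powR_gt0 _ _).
- by move=> k0 n m w hk a4; exact: partC.
- by move=> N; exact: partD.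
Qed.
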